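(* Let $p \in (0,1)$. Define a sequence $\{X_i\}_{i\ge1}$ of $\{0,1\}$-valued random variables as follows: $X_1 = 1$ with probability one, and for each $n = 1,2,\dots$, let $U_n$ be uniformly distributed on $\{1,\dots,n\}$ (chosen independently of everything else) and set $X_{n+1} = X_{U_n}$ with probability $p$ and $X_{n+1} = 0$ with probability $1-p$ (all choices made independently). Let $H_n := \sum_{i=1}^n X_i$. For $k = 1,2,\dots$ and $n = 1,2,\dots$ let $$a_n^{(k)} := \frac{\Gamma(n+kp)}{\Gamma(n)\Gamma(1+kp)}.$$ Then for every $k = 1,2,\dots$ and every $n = 1,2,\dots$, $$E[(H_n)_k] = k! \sum_{i=1}^k (-1)^{k-i}\binom{k-1}{i-1} a_n^{(i)},$$ where $(x)_k := x(x-1)\cdots(x-k+1)$ denotes the falling factorial (with $(x)_1 = x$).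
   Context: This is the ''laziest'' minimal random walk model of elephant type (parameter $q=0$, initial step $X_1=1$). Equivalently, the conditional law of $X_{n+1}$ given $X_1,\dots,X_n$ is $P(X_{n+1}=1\mid X_1,\dots,X_n) = p H_n/n$. *)

(* Defs.v *)
From HB Require Import structures.
From mathcomp Require Import all_boot all_order all_algebra.
From mathcomp Require Import all_classical all_reals all_analysis.
Set Implicit Arguments. Unset Strict Implicit. Unset Printing Implicit Defensive.
Import Order.TTheory GRing.Theory Num.Theory.
Local Open Scope ring_scope.
Local Open Scope classical_set_scope.

(* Euler's Gamma function: Gamma x = int_0^oo t^(x-1) e^(-t) dt
   (used only for x > 0, where the integral converges). *)
Definition Gamma (R : realType) (x : R) : R :=
  Rintegral (@lebesgue_measure R) `[0%R, +oo[%classic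
    (fun t : R => t `^ (x - 1) * expR (- t)).

Definition a_coef (R : realType) (p : R) (k n : nat) : R :=
  Gamma (n%:R + k%:R * p) / (Gamma n%:R * Gamma (1 + k%:R * p)).

(* A state is the history xs = [:: X_1; ...; X_m].
   One step: U_m uniform on {1,...,m} (index u : 'I_m, 0-based) and,
   independently, a coin B_m with P(B_m = true) = p; then
   X_{m+1} = X_{U_m} if B_m, and X_{m+1} = 0 otherwise.
   [lerw_expect p j f xs] is the expectation of f(X_1,...,X_{m+j}) given
   the history xs (i.e. the sum over all choices of the j next
   (U, B) pairs, weighted by their product probabilities). *)
Fixpoint lerw_expect (R : realType) (p : R) (j : nat)
    (f : seq bool -> R) (xs : seq bool) : R :=
  match j with
  | 0 => f xs
  | j'.+1 =>
      let m := size xs in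
      \sum_(u < m) (p * (m%:R)^-1) *
          lerw_expect p j' f (rcons xs (nth false xs u))
      + (1 - p) * lerw_expect p j' f (rcons xs false)
  end.

(* E[f(X_1,...,X_n)] with X_1 = 1 almost surely (n >= 1). *)
Definition lerw_E (R : realType) (p : R) (n : nat) (f : seq bool -> R) : R :=
  lerw_expect p n.-1 f [:: true].

Definition H_of (xs : seq bool) : nat := count id xs.

Definition falling (R : realType) (x : R) (k : nat) : R :=
  \prod_(i < k) (x - i%:R).

(* Main.v *)
Require Import Defs.
From HB Require Import structures.
From mathcomp Require Import all_boot all_order all_algebra.
From mathcomp Require Import all_classical all_reals all_analysis.
From mathcomp Require Import ring lra measurable_realfun.
Import numFieldNormedType.Exports.
Import Order.TTheory GRing.Theory Num.Theory.
Local Open Scope classical_set_scope.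
Local Open Scope ring_scope.

Section Comb.
Variable R : realType.
Variable p : R.

Definition stepE (f : seq bool -> R) (xs : seq bool) : R :=
  let m := size xs in
  \sum_(u < m) (p * (m%:R)^-1) * f (rcons xs (nth false xs u))
  + (1 - p) * f (rcons xs false).

Lemma lerw_S j f xs : lerw_expect p j.+1 f xs = stepE (lerw_expect p j f) xs.
Proof. by []. Qed.

Lemma lerw_tower j f xs :
  lerw_expect p j.+1 f xs = lerw_expect p j (stepE f) xs.
Proof.
elim: j xs => [|j IH] xs; first by [].
rewrite lerw_S [RHS]lerw_S /stepE.
congr (_ + _); last by rewrite IH.
by apply: eq_bigr => u _; rewrite IH.
Qed.

Lemma lerw_congr j f g xs :
  (forall ys, size ys = (size xs + j)%N -> f ys = g ys) ->
  lerw_expect p j f xs = lerw_expect p j g xs.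
Proof.
elim: j xs => [|j IH] xs H; first by apply: H; rewrite addn0.
rewrite !lerw_S /stepE; congr (_ + _).
  apply: eq_bigr => u _; congr (_ * _); apply: IH => ys Hy; apply: H.
  by rewrite Hy size_rcons addSnnS.
congr (_ * _); apply: IH => ys Hy; apply: H.
by rewrite Hy size_rcons addSnnS.
Qed.

Lemma lerw_lin j a b f g xs :
  lerw_expect p j (fun ys => a * f ys + b * g ys) xs =
  a * lerw_expect p j f xs + b * lerw_expect p j g xs.
Proof.
elim: j xs => [|j IH] xs; first by [].
rewrite !lerw_S /stepE.
under eq_bigr => u _ do rewrite IH mulrDr mulrCA [X in _ + X]mulrCA.
rewrite IH big_split /= -!mulr_sumr.
ring.
Qed.

Lemma falling_recl (x : R) K : falling x K.+1 = x * falling (x - 1) K.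
Proof.
rewrite /falling big_ord_recl /= subr0; congr (_ * _).
by apply: eq_bigr => i _; rewrite /bump /= natrD opprD addrA.
Qed.

Lemma falling_recr (x : R) K : falling x K.+1 = falling x K * (x - K%:R).
Proof. by rewrite /falling big_ord_recr. Qed.

Lemma sum_if_seq (s : seq bool) (A B : R) :
  \sum_(x <- s) (if x then A else B) = (count id s)%:R * A + (count negb s)%:R * B.
Proof.
elim: s => [|x s IH]; first by rewrite big_nil !mul0r addr0.
rewrite big_cons IH /=; case: x => /=; rewrite ?add0n ?natrD; ring.
Qed.

Lemma step_falling K xs : (0 < size xs)%N ->
  stepE (fun ys => falling (H_of ys)%:R K.+1) xs =
  (1 + p * K.+1%:R / (size xs)%:R) * falling (H_of xs)%:R K.+1
  + p * K.+1%:R * K%:R / (size xs)%:R * falling (H_of xs)%:R K.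
Proof.
move=> hm; rewrite /stepE /H_of.
set m := size xs.
have -> : \sum_(u < m) p * m%:R^-1 *
     falling (count id (rcons xs (nth false xs u)))%:R K.+1
   = p * m%:R^-1 * \sum_(x <- xs) (if x then falling ((count id xs)%:R + 1) K.+1
                                   else falling (count id xs)%:R K.+1).
  rewrite -mulr_sumr; congr (_ * _).
  rewrite (big_nth false) big_mkord; apply: eq_bigr => u _.
  rewrite -cats1 count_cat /= addn0.
  by case: (nth false xs u); rewrite ?addn1 ?addn0 // -addn1 natrD.
rewrite sum_if_seq -cats1 count_cat /= addn0.
set H := count id xs.
have hmH : m = (H + count negb xs)%N.
  by rewrite /m /H -(count_predC id xs).
have mne : (m%:R : R) != 0 by rewrite pnatr_eq0 -lt0n.
rewrite falling_recl addrK.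
rewrite addn0 !(falling_recr H%:R K).
have -> : ((count negb xs)%:R : R) = m%:R - H%:R by rewrite hmH natrD addrC addKr.
rewrite -!natr1.
field; exact: mne.
Qed.


Definition Fk k n := lerw_E p n (fun xs => falling (H_of xs)%:R k).

Lemma F_rec K n : (0 < n)%N ->
  Fk K.+1 n.+1 = (1 + p * K.+1%:R / n%:R) * Fk K.+1 n
                 + p * K.+1%:R * K%:R / n%:R * Fk K n.
Proof.
case: n => [//|n] _.
rewrite /Fk /lerw_E; change (n.+2.-1) with n.+1; rewrite lerw_tower.
rewrite (@lerw_congr n _ (fun ys => (1 + p * K.+1%:R / n.+1%:R) * falling (H_of ys)%:R K.+1
   + p * K.+1%:R * K%:R / n.+1%:R * falling (H_of ys)%:R K)); last first.
  move=> ys /= Hy; rewrite step_falling ?Hy //.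
by rewrite lerw_lin.
Qed.

Lemma F_base K : Fk K.+1 1 = (K == 0)%:R.
Proof.
rewrite /Fk /lerw_E /= /H_of /= falling_recl subrr mul1r.
case: K => [|K]; first by rewrite /falling big_ord0.
by rewrite falling_recl mul0r.
Qed.

Variable a : nat -> nat -> R.

Definition Gk k n := (k`!)%:R * \sum_(1 <= i < k.+1)
      (-1) ^+ (k - i) * ('C(k.-1, i.-1))%:R * a i n.

Lemma G_reindex K n : Gk K.+1 n =
  (K.+1`!)%:R * \sum_(i < K.+1) (-1) ^+ (K - i) * ('C(K, i))%:R * a i.+1 n.
Proof. by rewrite /Gk big_add1 /= big_mkord. Qed.

Lemma G0 n : Gk 0 n = 0.
Proof. by rewrite /Gk big_geq // mulr0. Qed.

Lemma G_base K : (forall i, a i.+1 1 = 1) -> Gk K.+1 1 = (K == 0)%:R.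
Proof.
move=> h1; rewrite G_reindex.
under eq_bigr => i _ do rewrite h1 mulr1.
have -> : \sum_(i < K.+1) (-1) ^+ (K - i) * ('C(K, i))%:R = (0 : R) ^+ K.
  rewrite -[X in _ = X ^+ K](addNr 1) exprDn; apply: eq_bigr => i _.
  by rewrite expr1n mulr1 mulr_natr.
case: K => [|K]; first by rewrite expr0 mulr1.
by rewrite expr0n /= mulr0.
Qed.

Lemma G_rec K n : (0 < n)%N ->
  (forall i, a i n.+1 = (1 + i%:R * p / n%:R) * a i n) ->
  Gk K.+1 n.+1 = (1 + p * K.+1%:R / n%:R) * Gk K.+1 n
                 + p * K.+1%:R * K%:R / n%:R * Gk K n.
Proof.
move=> hn ha.
have E1 : \sum_(i < K.+1) (-1) ^+ (K - i) * ('C(K, i))%:R * a i.+1 n.+1 =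
   (1 + p * K.+1%:R / n%:R) * \sum_(i < K.+1) (-1) ^+ (K - i) * ('C(K, i))%:R * a i.+1 n
   + p / n%:R * \sum_(i < K.+1) (-1) ^+ (K - i) * ('C(K, i))%:R * (i%:R - K%:R) * a i.+1 n.
  rewrite !mulr_sumr -big_split /=; apply: eq_bigr => i _.
  rewrite ha -!natr1; ring.
rewrite !G_reindex E1.
move: E1; case: K => [|K] _.
  by rewrite G0 !big_ord1 /=; ring.
have ES : \sum_(i < K.+2) (-1) ^+ (K.+1 - i) * ('C(K.+1, i))%:R * (i%:R - K.+1%:R) * a i.+1 n
   = K.+1%:R * \sum_(i < K.+1) (-1) ^+ (K - i) * ('C(K, i))%:R * a i.+1 n.
  rewrite big_ord_recr /= subrr mulr0 mul0r addr0 mulr_sumr.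
  apply: eq_bigr => i _.
  have hi : (i <= K)%N by rewrite -ltnS.
  rewrite subSn // exprS.
  have hb := mul_bin_down K.+1 i; rewrite /= in hb.
  have hb' : (K.+1%:R : R) * ('C(K, i))%:R = (K.+1 - i)%:R * ('C(K.+1, i))%:R.
    by rewrite -!natrM hb.
  rewrite natrB in hb'; last by apply: leqW.
  have key : ('C(K.+1, i))%:R * ((i : nat)%:R - K.+1%:R) = - (K.+1%:R * ('C(K, i))%:R :> R).
    by rewrite hb'; ring.
  rewrite -[(_ * ('C(K.+1, i))%:R) * _]mulrA key.
  ring.
rewrite ES G_reindex.
rewrite [in RHS](factS K.+1) natrM.
ring.
Qed.

Lemma F_eq_G : (forall i, a i.+1 1 = 1) ->
  (forall i n, (0 < n)%N -> a i n.+1 = (1 + i%:R * p / n%:R) * a i n) ->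
  forall n K, (0 < n)%N -> Fk K.+1 n = Gk K.+1 n.
Proof.
move=> h1 ha; elim => [//|n IH] K _.
case: n IH => [|n] IH; first by rewrite F_base G_base.
rewrite F_rec // G_rec //; last by move=> i; exact: ha.
rewrite IH //; case: K => [|K]; first by rewrite !mulr0 !mul0r.
by rewrite IH.
Qed.

End Comb.

Section Gam.
Variable R : realType.
Notation mu := (@lebesgue_measure R).

Definition gf (r : R) (s : R) : R := s `^ r * expR (- s).

Lemma cont_pow (r t : R) : 0 < t -> {for t, continuous (fun s : R => s `^ r)}.
Proof.
move=> t0; apply: differentiable_continuous; apply/derivable1_diffP.
by apply: derivable_powR; rewrite in_itv /= t0.
Qed.

Lemma cont_expN : continuous (fun s : R => expR (- s)).
Proof.
move=> t; apply: (continuous_comp (f := fun s : R => - s)).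
  exact: continuousN.
exact: continuous_expR.
Qed.

Lemma cont_gf (r t : R) : 0 < t -> {for t, continuous (gf r)}.
Proof.
move=> t0; apply: continuousM; [exact: cont_pow | exact: cont_expN].
Qed.

Lemma cvg_pow0 (r : R) : 0 <= r -> (fun s : R => s `^ r) @ 0^'+ --> 0 `^ r.
Proof.
rewrite le_eqVlt => /orP[/eqP <-|r0].
  rewrite powRr0; under eq_fun do rewrite powRr0; exact: cvg_cst.
by rewrite powR0 ?gt_eqF //; exact: powR_cvg0.
Qed.

Lemma cvg_gf0 (r : R) : 0 <= r -> gf r @ 0^'+ --> gf r 0.
Proof.
move=> r0; apply: cvgM; first exact: cvg_pow0.
apply: cvg_at_right_filter; exact: cont_expN.
Qed.

Lemma derive_gf (x t : R) : 0 < t ->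
  is_derive t 1 (gf x) (x * t `^ (x - 1) * expR (- t) - t `^ x * expR (- t)).
Proof.
move=> t0.
have h1 : is_derive t 1 (fun s : R => s `^ x) (x * t `^ (x - 1)) by exact: is_derive1_powR.
have h2 : is_derive t 1 (fun s : R => expR (- s)) (expR (- t) * (-1)).
  apply: (is_derive1_comp (f := expR) (g := fun s : R => - s)).
have := is_deriveM h1 h2.
rewrite /gf => H.
have -> : x * t `^ (x - 1) * expR (- t) - t `^ x * expR (- t) =
  t `^ x * (expR (- t) * -1) + expR (- t) * (x * t `^ (x - 1)) by ring.
exact: H.
Qed.


Lemma cvg_invy : (fun s : R => s^-1) @ +oo --> 0.
Proof.
have H : \forall s \near +oo, 0 < (fun s : R => s) s.
  by apply: nbhs_pinfty_gt; rewrite real0.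
exact: ((gtr0_cvgV0 H).2 cvg_id).
Qed.

Lemma lim_gf (x : R) : 0 <= x -> gf x @ +oo --> 0.
Proof.
move=> x0.
set m := Num.Def.archi_bound x.
have xm : x <= m%:R by apply/ltW/archi_boundP.
set C : R := (m.+1`!)%:R.
have C0 : 0 < C by rewrite ltr0n fact_gt0.
have hC : (fun s => C * s^-1) @ +oo --> 0.
  rewrite -(mulr0 C); apply: cvgMr; exact: cvg_invy.
apply: (squeeze_cvgr _ (cvg_cst 0) hC).
near=> s.
have s1 : 1 <= s by near: s; apply: nbhs_pinfty_ge; rewrite num_real.
have s0 : 0 < s by apply: lt_le_trans s1.
apply/andP; split.
  by rewrite /gf mulr_ge0 // ?powR_ge0 ?expR_ge0.
rewrite /gf.
have e1 : s `^ x <= s ^+ m.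
  by have := ler_powR s1 xm; rewrite powR_mulrn // ltW.
have e2 := expR_ge1Dxn m (ltW s0).
rewrite expRN.
have eS : 0 < expR s by apply: expR_gt0.
have e3 : s ^+ m.+1 / C <= expR s by apply: le_trans e2; rewrite lerDr.
have p3 : 0 < s ^+ m.+1 / C by rewrite divr_gt0 // exprn_gt0.
apply: (le_trans (y := s ^+ m / expR s)).
  by apply: ler_wpM2r; [rewrite invr_ge0 ltW|].
apply: (le_trans (y := s ^+ m / (s ^+ m.+1 / C))).
  apply: ler_wpM2l; first by rewrite exprn_ge0 // ltW.
  by rewrite lef_pV2 ?posrE.
have sm0 : s ^+ m != 0 by rewrite expf_neq0 // gt_eqF.
rewrite exprS le_eqVlt; apply/orP; left; apply/eqP.
field; rewrite sm0 gt_eqF // gt_eqF //.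
Unshelve. all: by end_near.
Qed.


Lemma mgfT (r : R) : measurable_fun setT (gf r).
Proof.
apply: measurable_funM; first exact: measurable_powR.
apply: measurableT_comp; first exact: measurable_expR.
exact: oppr_measurable.
Qed.

Lemma mgf (r : R) (D : set R) : measurable D -> measurable_fun D (fun s => (gf r s)%:E).
Proof.
move=> mD; apply/measurable_EFinP.
exact: measurable_funS (mgfT r).
Qed.

Lemma mgf2 (a r1 r2 : R) (D : set R) : measurable D ->
  measurable_fun D (fun s => (a * gf r1 s - gf r2 s)%:E).
Proof.
move=> mD; apply/measurable_EFinP; apply: (measurable_funS _ _ (E := setT)) => //.
apply: measurable_funB; last exact: mgfT.
apply: measurable_funM; first exact: measurable_cst.
exact: mgfT.
Qed.

Lemma mgf1 (a r : R) (D : set R) : measurable D ->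
  measurable_fun D (fun s => (a * gf r s)%:E).
Proof.
move=> mD; apply/measurable_EFinP; apply: (measurable_funS _ _ (E := setT)) => //.
apply: measurable_funM; first exact: measurable_cst.
exact: mgfT.
Qed.

Lemma mgf3 (a r1 r2 : R) (D : set R) : measurable D ->
  measurable_fun D (fun s => (gf r2 s - a * gf r1 s)%:E).
Proof.
move=> mD; apply/measurable_EFinP; apply: (measurable_funS _ _ (E := setT)) => //.
apply: measurable_funB; first exact: mgfT.
apply: measurable_funM; first exact: measurable_cst.
exact: mgfT.
Qed.

Lemma gf_ge0 (r s : R) : 0 <= gf r s.
Proof. by rewrite /gf mulr_ge0 ?powR_ge0 ?expR_ge0. Qed.

Lemma split_int (f : R -> \bar R) (c : R) : 0 < c ->
  measurable_fun `[(0%R:R), +oo[ f -> (forall s : R, 0 <= s -> (0%R%:E <= f s)%E) ->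
  (\int[mu]_(s in `[(0%R:R), +oo[) f s =
   \int[mu]_(s in `[(0%R:R), c]) f s + \int[mu]_(s in `[c, +oo[) f s)%E.
Proof.
move=> c0 mf f0.
rewrite (@itv_bndbnd_setU _ _ (BLeft 0) (BRight c) +oo%O); last 2 first.
- by rewrite bnd_simp ltW.
- by [].
rewrite ge0_integral_setU //=.
- rewrite integral_itv_obnd_cbnd //.
  apply: measurable_funS mf => //.
  by apply: subset_itvr; rewrite bnd_simp ltW.
- by rewrite -itv_bndbnd_setU // bnd_simp ltW.
- move=> s [|]; rewrite in_itv /= => /andP[s0 s1]; apply: f0 => //.
  by apply: ltW; apply: lt_trans s0.
- apply/disj_setPS => s [] /=; rewrite !in_itv /= => /andP[_ sc] /andP[cs _].
  by move: (le_lt_trans sc cs); rewrite ltxx.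
Qed.


Lemma gf_succ (r s : R) : 0 <= r -> 0 <= s -> gf (r + 1) s = s * gf r s.
Proof.
move=> r0 s0; rewrite /gf powRD; last by rewrite implybE gt_eqF ?orbT // ltr_wpDl.
by rewrite powRr1 // mulrCA mulrA.
Qed.

Lemma dgf (r t : R) : 0 <= r -> 0 < t ->
  is_derive t 1 (gf (r + 1)) ((r + 1) * gf r t - gf (r + 1) t).
Proof.
move=> r0 t0; have := derive_gf (r + 1) t t0; rewrite addrK /gf mulrA; exact.
Qed.

Lemma cont_comb (r t : R) : 0 < t ->
  {for t, continuous (fun s => (r + 1) * gf r s - gf (r + 1) s)}.
Proof.
move=> t0; apply: continuousB; last exact: cont_gf.
apply: continuousM; first exact: cst_continuous.
exact: cont_gf.
Qed.

Lemma pieceA (r : R) : 0 <= r ->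
  (\int[mu]_(s in `[(0%R:R), (r + 1)%R]) ((r + 1) * gf r s)%R%:E =
   \int[mu]_(s in `[(0%R:R), (r + 1)%R]) (gf (r + 1)%R s)%:E + (gf (r + 1) (r + 1))%R%:E)%E.
Proof.
move=> r0.
have c0 : 0 < r + 1 by rewrite ltr_wpDl.
have HF : (\int[mu]_(s in `[(0%R:R), (r + 1)%R]) ((r + 1) * gf r s - gf (r + 1) s)%R%:E
    = (gf (r + 1) (r + 1))%:E - (gf (r + 1) 0)%:E)%E.
  apply: continuous_FTC2 => //.
  - apply/continuous_within_itvP => //; split.
    + move=> t; rewrite in_itv /= => /andP[t0 _]; exact: cont_comb.
    + apply: cvgB; last by apply: cvg_gf0; exact: ltW.
      apply: cvgM; first exact: cvg_cst.
      exact: cvg_gf0.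
    + apply: cvg_at_left_filter; exact: cont_comb.
  - split.
    + move=> t; rewrite in_itv /= => /andP[t0 _].
      by case: (dgf r t r0 t0).
    + apply: cvg_gf0; exact: ltW.
    + apply: cvg_at_left_filter; exact: cont_gf.
  - move=> t; rewrite in_itv /= => /andP[t0 _].
    by rewrite derive1E; have [_ ->] := dgf r t r0 t0.
have g0 : gf (r + 1) 0 = 0 by rewrite /gf powR0 ?mul0r // gt_eqF.
rewrite g0 sube0 in HF.
have -> : (\int[mu]_(s in `[(0%R:R), (r + 1)%R]) ((r + 1) * gf r s)%R%:E =
   \int[mu]_(s in `[(0%R:R), (r + 1)%R]) ((gf (r + 1) s)%:E + ((r + 1) * gf r s - gf (r + 1) s)%R%:E))%E.
  by apply: eq_integral => s _; rewrite -EFinD; congr EFin; ring.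
rewrite ge0_integralD //.
- by rewrite HF.
- by move=> s _; rewrite lee_fin gf_ge0.
- exact: mgf.
- move=> s; rewrite /= in_itv /= => /andP[s0 s1].
  rewrite lee_fin gf_succ // -mulrBl mulr_ge0 ?subr_ge0 // gf_ge0 //.
- exact: mgf2.
Qed.



Lemma pieceB (r : R) : 0 <= r ->
  (\int[mu]_(s in `[(r + 1)%R, +oo[) (gf (r + 1)%R s)%:E =
   \int[mu]_(s in `[(r + 1)%R, +oo[) ((r + 1) * gf r s)%R%:E + (gf (r + 1) (r + 1))%R%:E)%E.
Proof.
move=> r0.
have c0 : 0 < r + 1 by rewrite ltr_wpDl.
have HF : (\int[mu]_(s in `[(r + 1)%R, +oo[) (gf (r + 1) s - (r + 1) * gf r s)%R%:E
    = 0%R%:E - (- gf (r + 1) (r + 1))%R%:E)%E.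
  apply: (@ge0_continuous_FTC2y R _ (fun s => - gf (r + 1) s)).
  - move=> s cs; have s0 : 0 <= s by apply: le_trans (ltW c0) cs.
    rewrite gf_succ //.
    by rewrite -mulrBl mulr_ge0 ?subr_ge0 // gf_ge0.
  - apply/continuous_within_itvcyP; split.
    + move=> t; rewrite in_itv /= => /andP[t0 _].
      have t0' : 0 < t by apply: lt_trans t0.
      apply: continuousB; first exact: cont_gf.
      apply: continuousM; first exact: cst_continuous.
      exact: cont_gf.
    + apply: cvg_at_right_filter.
      apply: continuousB; first exact: cont_gf.
      apply: continuousM; first exact: cst_continuous.
      exact: cont_gf.
  - rewrite -oppr0; apply: cvgN; apply: lim_gf; exact: ltW.
  - move=> t ct; have t0 : 0 < t by apply: lt_trans ct.
    by case: (is_deriveN (dgf r t r0 t0)).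
  - apply: cvg_at_right_filter; apply: continuousN; exact: cont_gf.
  - move=> t; rewrite in_itv /= => /andP[ct _].
    have t0 : 0 < t by apply: lt_trans ct.
    rewrite derive1E; have [_ ->] := is_deriveN (dgf r t r0 t0).
    by rewrite opprB.
rewrite sub0e EFinN oppeK in HF.
have -> : (\int[mu]_(s in `[(r + 1)%R, +oo[) (gf (r + 1) s)%:E =
   \int[mu]_(s in `[(r + 1)%R, +oo[) (((r + 1) * gf r s)%R%:E + (gf (r + 1) s - (r + 1) * gf r s)%R%:E))%E.
  by apply: eq_integral => s _; rewrite -EFinD; congr EFin; ring.
rewrite ge0_integralD //.
- by rewrite HF.
- by move=> s _; rewrite lee_fin mulr_ge0 ?gf_ge0 // ltW.
- exact: mgf1.
- move=> s; rewrite /= in_itv /= andbT => cs.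
  have s0 : 0 <= s by apply: le_trans (ltW c0) cs.
  rewrite lee_fin gf_succ //.
  by rewrite -mulrBl mulr_ge0 ?subr_ge0 // gf_ge0.
- exact: mgf3.
Qed.


Lemma intZ (a r : R) (D : set R) : measurable D -> 0 <= a ->
  (a%:E * \int[mu]_(s in D) (gf r s)%:E = \int[mu]_(s in D) (a * gf r s)%R%:E)%E.
Proof.
move=> mD a0; rewrite -ge0_integralZl_EFin //.
- by move=> s _; rewrite lee_fin gf_ge0.
- exact: mgf.
Qed.

Definition EG (r : R) := (\int[mu]_(s in `[(0%R:R), +oo[) (gf r s)%:E)%E.

Lemma EG_ge0 r : (0%R%:E <= EG r)%E.
Proof. by apply: integral_ge0 => s _; rewrite lee_fin gf_ge0. Qed.

Lemma EG_succ (r : R) : 0 <= r -> EG (r + 1) = ((r + 1)%:E * EG r)%E.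
Proof.
move=> r0.
have c0 : 0 < r + 1 by rewrite ltr_wpDl.
have sp r' := @split_int (fun s => (gf r' s)%:E) (r + 1) c0 (mgf r' _ (measurable_itv _))
  (fun s _ => gf_ge0 r' s).
rewrite /EG !sp pieceB // ge0_muleDr; last 2 first.
- by apply: integral_ge0 => s _; rewrite lee_fin gf_ge0.
- by apply: integral_ge0 => s _; rewrite lee_fin gf_ge0.
rewrite !intZ //; last 2 first.
- exact: ltW.
- exact: ltW.
rewrite pieceA //.
by rewrite addeA [X in _ = X]addeAC.
Qed.


Lemma gf0E (s : R) : gf 0 s = expR (- s).
Proof. by rewrite /gf powRr0 mul1r. Qed.

Lemma dexpN (t : R) : is_derive t 1 (fun s : R => - expR (- s)) (gf 0 t).
Proof.
have h2 : is_derive t 1 (fun s : R => expR (- s)) (expR (- t) * (-1)).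
  by apply: (is_derive1_comp (f := expR) (g := fun s : R => - s)).
have := is_deriveN h2; rewrite gf0E mulrN1 opprK; exact.
Qed.

Lemma int_gf0 (a : R) : 0 <= a ->
  (\int[mu]_(s in `[a, +oo[) (gf 0 s)%:E = (expR (- a))%:E)%E.
Proof.
move=> a0.
have HF : (\int[mu]_(s in `[a, +oo[) (gf 0 s)%:E = 0%R%:E - (- expR (- a))%R%:E)%E.
  apply: (@ge0_continuous_FTC2y R _ (fun s => - expR (- s))).
  - by move=> s _; apply: gf_ge0.
  - apply/continuous_within_itvcyP; split.
    + move=> t; rewrite in_itv /= => /andP[t0 _].
      by apply: cont_gf; apply: le_lt_trans t0.
    + under eq_fun do rewrite gf0E; rewrite gf0E.
      by apply: cvg_at_right_filter; apply: cont_expN.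
  - rewrite -oppr0; apply: cvgN; exact: cvgr_expR.
  - by move=> t _; case: (dexpN t).
  - by apply: cvgN; apply: cvg_at_right_filter; apply: cont_expN.
  - by move=> t _; rewrite derive1E; have [_ ->] := dexpN t.
by rewrite HF sub0e EFinN oppeK.
Qed.

Lemma EG0 : EG 0 = 1%:E.
Proof. by rewrite /EG int_gf0 // oppr0 expR0. Qed.

Lemma EG_nat (m : nat) : EG m%:R = (m`!)%:R%:E.
Proof.
elim: m => [|m IH]; first by rewrite EG0.
rewrite -natr1 EG_succ // IH -EFinM factS natrM natr1 mulrC.
by [].
Qed.

Lemma pow_le (r s : R) (m : nat) : 0 <= r -> r <= m%:R -> 0 <= s ->
  s `^ r <= 1 + s `^ m%:R.
Proof.
move=> r0 rm s0.
have [s1|s1] := leP 1 s.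
  by apply: le_trans (ler_powR s1 rm) _; rewrite lerDr.
apply: (le_trans (y := 1)); last by rewrite lerDl powR_ge0.
have [->|sn0] := eqVneq s 0.
  have [->|rn0] := eqVneq r 0; first by rewrite powRr0.
  by rewrite powR0.
have sp : 0 < s by rewrite lt_neqAle eq_sym sn0.
have := @ger_powR R s; rewrite sp (ltW s1) /= => /(_ isT 0 r r0).
by rewrite powRr0.
Qed.

Lemma EG_fin (r : R) : 0 <= r -> EG r \is a fin_num.
Proof.
move=> r0.
set m := Num.Def.archi_bound r.
have rm : r <= m%:R by apply/ltW/archi_boundP.
rewrite ge0_fin_numE ?EG_ge0 //.
apply: (le_lt_trans (y := (EG 0 + EG m%:R)%E)); last by rewrite EG0 EG_nat -EFinD ltry.
rewrite /EG -ge0_integralD //; last 4 first.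
- by move=> s _; rewrite lee_fin gf_ge0.
- exact: mgf.
- by move=> s _; rewrite lee_fin gf_ge0.
- exact: mgf.
apply: ge0_le_integral => //.
- by move=> s _; rewrite lee_fin gf_ge0.
- exact: mgf.
- apply/measurable_EFinP; apply: measurable_funD; apply: (measurable_funS _ _ (E := setT)) => //;
  exact: mgfT.
move=> s; rewrite /= in_itv /= andbT => s0.
rewrite -EFinD lee_fin /gf powRr0 -mulrDl ler_wpM2r ?expR_ge0 //.
exact: pow_le.
Qed.

Lemma EG_gt0 (r : R) : 0 <= r -> (0%R%:E < EG r)%E.
Proof.
move=> r0; apply: (lt_le_trans (y := (expR (-1))%:E)); first by rewrite lte_fin expR_gt0.
rewrite -int_gf0 //.
apply: (le_trans (y := (\int[mu]_(s in `[(1%R:R), +oo[) (gf r s)%:E)%E)).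
  apply: ge0_le_integral => //.
  - by move=> s _; rewrite lee_fin gf_ge0.
  - exact: mgf.
  - exact: mgf.
  move=> s; rewrite /= in_itv /= andbT => s1.
  rewrite lee_fin /gf ler_wpM2r ?expR_ge0 //.
  by have := ler_powR s1 r0.
apply: ge0_subset_integral => //.
- exact: mgf.
- by move=> s _; rewrite lee_fin gf_ge0.
- by apply: subset_itvr; rewrite bnd_simp.
Qed.

Lemma GammaE (x : R) : Gamma x = fine (EG (x - 1)).
Proof. by []. Qed.

Lemma Gamma1 : Gamma (1 : R) = 1.
Proof. by rewrite GammaE subrr EG0. Qed.

Lemma Gamma_succ (x : R) : 1 <= x -> Gamma (x + 1) = x * Gamma x.
Proof.
move=> x1; have x0 : 0 <= x - 1 by rewrite subr_ge0.
rewrite !GammaE addrK -{1}(subrK 1 x) EG_succ // subrK fineM //.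
exact: EG_fin.
Qed.

Lemma Gamma_neq0 (x : R) : 1 <= x -> Gamma x != 0.
Proof.
move=> x1; have x0 : 0 <= x - 1 by rewrite subr_ge0.
rewrite GammaE gt_eqF // fine_gt0 // EG_gt0 //=.
by rewrite -ge0_fin_numE ?EG_ge0 // EG_fin.
Qed.

End Gam.

Section Final.
Variable R : realType.
Variable p : R.
Hypothesis p0 : 0 <= p.

Lemma a1 i : a_coef p i.+1 1 = 1.
Proof.
have h : 1 <= 1 + i.+1%:R * p by rewrite lerDl mulr_ge0.
rewrite /a_coef mulr1n Gamma1 mul1r divff //; exact: (@Gamma_neq0 R).
Qed.

Lemma aS i n : (0 < n)%N ->
  a_coef p i n.+1 = (1 + i%:R * p / n%:R) * a_coef p i n.
Proof.
move=> n0.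
have n1 : (1 : R) <= n%:R by rewrite ler1n.
have h1 : (1 : R) <= n%:R + i%:R * p by apply: le_trans n1 _; rewrite lerDl mulr_ge0.
have h2 : (1 : R) <= 1 + i%:R * p by rewrite lerDl mulr_ge0.
rewrite /a_coef -natr1 (addrC (n%:R + 1)) addrA (addrC (i%:R * p)) Gamma_succ //.
rewrite Gamma_succ //.
have g1 := @Gamma_neq0 R _ n1.
have g2 := @Gamma_neq0 R _ h2.
have nn0 : (n%:R : R) != 0 by rewrite pnatr_eq0 -lt0n.
field.
by rewrite g1 g2 nn0.
Qed.

End Final.

Theorem theorem2p1 (R : realType) (p : R) (hp0 : 0 < p) (hp1 : p < 1)
    (k n : nat) (hk : (0 < k)%N) (hn : (0 < n)%N) :
  lerw_E p n (fun xs => falling (H_of xs)%:R k) =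
  (k`!)%:R * \sum_(1 <= i < k.+1)
      (-1) ^+ (k - i) * ('C(k.-1, i.-1))%:R * a_coef p i n.
Proof.
case: k hk => [//|K] _.
have p0 : 0 <= p by apply: ltW.
exact: (@F_eq_G R p (a_coef p) (@a1 R p p0) (fun i m hm => @aS R p p0 i m hm) n K hn).
Qed.
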